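(* Let $n,m\in\mathbb{N}$, $f:\mathbb{F}_2^n\to\mathbb{F}_2$, $S\subseteq\mathbb{F}_2^n$, and let $g$ be the indicator function of $S$. Let $p=2^{-n}\sum_{\mathbf{x}\in S}|\mathcal{H}^{(m)}_f(\mathbf{x})|^2$. Then when the three-query algorithm $A^{(m)3,3}_n(g,f,f)$ is executed, the probability that the measured $n$-bit outcome is different from $0^n$ (i.e. contains at least one $1$) equals $4p-4p^2$.
   Context: $\zeta_m=e^{2\pi i/m}$, $\overline{\zeta_m}$ its complex conjugate; $wt$ is Hamming weight; $\mathbf{x}\cdot\mathbf{y}=\bigoplus_i x_iy_i$. The $m$-Hadamard transform is $\mathcal{H}^{(m)}_f(\boldsymbol{\omega})=2^{-n/2}\sum_{\mathbf{x}}(-1)^{f(\mathbf{x})\oplus\mathbf{x}\cdot\boldsymbol{\omega}}\zeta_m^{wt(\mathbf{x})}$. Gates: $\mathrm{H}$ Hadamard; $\Omega_m=\frac{1}{\sqrt2}\begin{pmatrix}1&\zeta_m\\1&-\zeta_m\end{pmatrix}$; $\overline{\Omega}_m=\frac{1}{\sqrt2}\begin{pmatrix}1&\overline{\zeta_m}\\1&-\overline{\zeta_m}\end{pmatrix}$; $U_f$ is the phase oracle $\ket{\mathbf{x}}\mapsto(-1)^{f(\mathbf{x})}\ket{\mathbf{x}}$. Algorithm $A^{(m)3,3}_n(f_1,f_2,f_3)$: starting from $\ket{0^n}$, apply in order $\mathrm{H}^{\otimes n}$, $U_{f_2}$, $\Omega_m^{\otimes n}$, $U_{f_1}$, $\mathrm{H}^{\otimes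 n}$, $U_{f_3}$, $\overline{\Omega}_m^{\otimes n}$, then measure all $n$ qubits in the computational basis. *)

(* Defs.v *)
From mathcomp Require Import all_boot all_algebra.
From mathcomp Require Import reals trigo.
From mathcomp Require Import complex.
Set Implicit Arguments. Unset Strict Implicit. Unset Printing Implicit Defensive.
Import GRing.Theory Num.Theory.
Local Open Scope ring_scope.

Definition bvec (n : nat) := {ffun 'I_n -> bool}.

Definition zerovec (n : nat) : bvec n := [ffun _ => false].

Definition wt n (x : bvec n) : nat := #|[set i | x i]|.

Definition dotb n (x y : bvec n) : bool := \big[addb/false]_(i < n) (x i && y i).

Definition sgn (R : realType) (b : bool) : R[i] := (-1) ^+ b.

Definition zeta (R : realType) (m : nat) : R[i] :=
  let t := 2 * pi / m%:R in Complex (cos t) (sin t).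

Definition mHadamard (R : realType) n (m : nat) (f : bvec n -> bool) (w : bvec n) : R[i] :=
  ((Num.sqrt (2 ^+ n : R))^-1)%:C%C *
  \sum_(x : bvec n) sgn R (f x (+) dotb x w) * zeta R m ^+ wt x.

(* n-qubit state vectors, indexed by computational basis states *)
Definition state (R : realType) n := bvec n -> R[i].

Definition bidx (b : bool) : 'I_2 := inord (nat_of_bool b).

(* single-qubit gates, with the convention U |b> = sum_c U c b |c> *)
Definition invsqrt2 (R : realType) : R[i] := ((Num.sqrt (2 : R))^-1)%:C%C.

Definition Hgate (R : realType) : 'M[R[i]]_2 :=
  \matrix_(i < 2, j < 2)
    (invsqrt2 R * (if (i == 1%N :> nat) && (j == 1%N :> nat) then -1 else 1)).

Definition Omega_gen (R : realType) (z : R[i]) : 'M[R[i]]_2 :=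
  \matrix_(i < 2, j < 2)
    (invsqrt2 R * (if (i == 0%N :> nat)
                   then (if (j == 0%N :> nat) then 1 else z)
                   else (if (j == 0%N :> nat) then 1 else - z))).

Definition Omega (R : realType) (m : nat) : 'M[R[i]]_2 := Omega_gen (zeta R m).
Definition Omegabar (R : realType) (m : nat) : 'M[R[i]]_2 := Omega_gen (conjc (zeta R m)).

Definition tensor_apply (R : realType) n (U : 'M[R[i]]_2) (psi : state R n) : state R n :=
  fun y => \sum_(x : bvec n) (\prod_(i < n) U (bidx (y i)) (bidx (x i))) * psi x.

Definition phase_oracle (R : realType) n (f : bvec n -> bool) (psi : state R n) : state R n :=
  fun x => sgn R (f x) * psi x.

Definition ket0 (R : realType) n : state R n := fun x => if x == zerovec n then 1 else 0.

Definition A33_state (R : realType) n (m : nat) (f1 f2 f3 : bvec n -> bool) : state R n :=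
  tensor_apply (Omegabar R m)
  (phase_oracle f3
  (tensor_apply (Hgate R)
  (phase_oracle f1
  (tensor_apply (Omega R m)
  (phase_oracle f2
  (tensor_apply (Hgate R) (@ket0 R n))))))).

Definition A33_prob (R : realType) n (m : nat) (f1 f2 f3 : bvec n -> bool) (y : bvec n) : R[i] :=
  `|A33_state R m f1 f2 f3 y| ^+ 2.

(* Main.v *)
Require Import Defs.
From mathcomp Require Import all_boot all_algebra.
From mathcomp Require Import reals trigo.
From mathcomp Require Import complex.
From mathcomp Require Import ring.
Import GRing.Theory Num.Theory.
Local Open Scope ring_scope.

Section Aux.
Variable R : realType.
Variable n : nat.

Lemma conjcM (a b : R[i]) : conjc (a * b) = conjc a * conjc b.
Proof. exact: rmorphM. Qed.
Lemma conjcX (a : R[i]) k : conjc (a ^+ k) = conjc a ^+ k.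
Proof. exact: rmorphXn. Qed.
Lemma conjc_sum (I : finType) (F : I -> R[i]) :
  conjc (\sum_(i : I) F i) = \sum_(i : I) conjc (F i).
Proof. exact: rmorph_sum. Qed.

Lemma sgn0 : sgn R false = 1. Proof. by rewrite /sgn expr0. Qed.
Lemma sgn1 : sgn R true = -1. Proof. by rewrite /sgn expr1. Qed.
Lemma sgnD a b : sgn R (a (+) b) = sgn R a * sgn R b.
Proof. by case: a; case: b; rewrite /= ?sgn0 ?sgn1 ?mulN1r ?opprK ?mul1r. Qed.
Lemma sgnK b : sgn R b * sgn R b = 1.
Proof. by case: b; rewrite ?sgn0 ?sgn1 ?mulN1r ?opprK ?mul1r. Qed.
Lemma sgnJ b : conjc (sgn R b) = sgn R b.
Proof. by case: b; rewrite ?sgn0 ?sgn1 ?rmorphN rmorph1. Qed.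

Lemma sgn_dot (x y : bvec n) : sgn R (dotb x y) = \prod_(i < n) sgn R (x i && y i).
Proof. by rewrite /dotb (big_morph (sgn R) sgnD sgn0). Qed.

Lemma dotbC (x y : bvec n) : dotb x y = dotb y x.
Proof. by rewrite /dotb; apply: eq_bigr => i _; rewrite andbC. Qed.

Lemma dotb0 (x : bvec n) : dotb x (zerovec n) = false.
Proof. by rewrite /dotb big1 // => i _; rewrite ffunE andbF. Qed.

Lemma wtE (x : bvec n) : wt x = (\sum_(i < n) nat_of_bool (x i))%N.
Proof.
rewrite /wt -sum1_card big_mkcond /=; apply: eq_bigr => i _.
by rewrite inE; case: (x i).
Qed.

Lemma Omega_entry (z : R[i]) (a b : bool) :
  Omega_gen z (bidx a) (bidx b) = invsqrt2 R * (sgn R (b && a) * z ^+ b).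
Proof.
rewrite /Omega_gen mxE /bidx !inordK; last (by case: a); last (by case: b).
by case: a; case: b; rewrite /= ?sgn0 ?sgn1 ?mul1r ?expr0 ?expr1 ?mulN1r.
Qed.

Lemma Hgate_eq : Hgate R = Omega_gen 1.
Proof.
apply/matrixP => i j; rewrite !mxE.
case: i => [[|[|//]] ?]; case: j => [[|[|//]] ?] //=.
Qed.

Definition cc := invsqrt2 R ^+ n.

Lemma tensor_Omega (z : R[i]) (psi : state R n) y :
  tensor_apply (Omega_gen z) psi y =
  \sum_(x : bvec n) (cc * sgn R (dotb x y) * z ^+ wt x) * psi x.
Proof.
apply: eq_bigr => x _; congr (_ * _).
rewrite (eq_bigr _ (fun i _ => Omega_entry z (y i) (x i))).
rewrite big_split /= big_split /= prodr_const card_ord mulrA /cc.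
congr (_ * _ * _); first by rewrite sgn_dot; apply: eq_bigr => i _; rewrite andbC.
by rewrite prodrXr wtE.
Qed.


Lemma orth (x x' : bvec n) :
  \sum_(y : bvec n) sgn R (dotb x y) * sgn R (dotb x' y) =
  if x == x' then 2 ^+ n else 0.
Proof.
under eq_bigr do rewrite !sgn_dot -big_split /=.
rewrite -(bigA_distr_bigA (fun i b => sgn R (x i && b) * sgn R (x' i && b))) /=.
under eq_bigr do rewrite big_bool /= !andbT !andbF sgn0 mul1r.
case: eqP => [<-|neq].
  by rewrite (eq_bigr (fun _ => 2)) ?prodr_const ?card_ord // => i _; rewrite sgnK.
case: (pickP (fun i => x i != x' i)) => [i Hi | H]; last first.
  by exfalso; apply: neq; apply/ffunP => i; have := H i; move/negbFE/eqP.
rewrite (bigD1 i) //=.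
by move: Hi; case: (x i); case: (x' i); rewrite //= ?sgn0 ?sgn1 ?mulN1r ?mul1r ?mulr1 ?subrr ?mul0r // addrC subrr mul0r.
Qed.


Lemma inv2sq : invsqrt2 R * invsqrt2 R = 2^-1.
Proof.
rewrite /invsqrt2 -rmorphM /= -expr2 exprVn sqr_sqrtr ?ler0n //.
by rewrite fmorphV /= rmorph_nat.
Qed.

Lemma invsqrt2J : conjc (invsqrt2 R) = invsqrt2 R.
Proof. by rewrite /invsqrt2 conjc_real. Qed.

Lemma ccJ : conjc cc = cc.
Proof. by rewrite /cc conjcX; congr (_ ^+ _); exact: invsqrt2J. Qed.

Lemma cc2 : cc * cc = (2 ^+ n)^-1.
Proof. by rewrite /cc -exprMn inv2sq exprVn. Qed.

Definition nrm (psi : state R n) := \sum_(y : bvec n) psi y * conjc (psi y).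

Lemma parseval (z : R[i]) (psi : state R n) : z * conjc z = 1 ->
  nrm (tensor_apply (Omega_gen z) psi) = nrm psi.
Proof.
move=> hz; rewrite /nrm.
under eq_bigr do rewrite tensor_Omega conjc_sum mulr_suml.
under eq_bigr do under eq_bigr do rewrite mulr_sumr.
rewrite exchange_big /=; apply: eq_bigr => x _.
rewrite exchange_big /= (bigD1 x) //= [X in _ + X]big1 ?addr0.
  transitivity (\sum_(y : bvec n) psi x * conjc (psi x) * ((cc * cc) * (z * conjc z) ^+ wt x) *
      (sgn R (dotb x y) * sgn R (dotb x y))).
    apply: eq_bigr => y _.
    rewrite !conjcM sgnJ ccJ conjcX exprMn; ring.
  by rewrite -mulr_sumr orth eqxx cc2 hz expr1n mulr1 divfK // expf_neq0 // pnatr_eq0.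
move=> x' hx'.
transitivity (\sum_(y : bvec n) psi x * conjc (psi x') * (cc * cc * z ^+ wt x * conjc z ^+ wt x') *
      (sgn R (dotb x y) * sgn R (dotb x' y))).
  apply: eq_bigr => y _.
  rewrite !conjcM sgnJ ccJ conjcX; ring.
by rewrite -mulr_sumr orth eq_sym (negbTE hx') mulr0.
Qed.

Lemma nrm_phase (f : bvec n -> bool) (psi : state R n) :
  nrm (phase_oracle f psi) = nrm psi.
Proof.
rewrite /nrm; apply: eq_bigr => y _. rewrite /phase_oracle conjcM sgnJ.
by rewrite mulrACA sgnK mul1r.
Qed.


Lemma nrm_ket0 : nrm (@ket0 R n) = 1.
Proof.
rewrite /nrm (bigD1 (zerovec n)) //= big1 ?addr0; first by rewrite /ket0 eqxx rmorph1 mulr1.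
by move=> y /negbTE hy; rewrite /ket0 hy mul0r.
Qed.

Lemma psi1E y : tensor_apply (Hgate R) (@ket0 R n) y = cc.
Proof.
rewrite Hgate_eq tensor_Omega (bigD1 (zerovec n)) //= big1 ?addr0.
  by rewrite /ket0 eqxx mulr1 expr1n mulr1 dotbC dotb0 sgn0 mulr1.
by move=> x /negbTE hx; rewrite /ket0 hx mulr0.
Qed.

End Aux.

Lemma zetaJ (R : realType) m : zeta R m * conjc (zeta R m) = 1.
Proof.
rewrite /zeta /=; apply/eqP; rewrite eq_complex /=; apply/andP; split; apply/eqP.
  by rewrite mulrN opprK -!expr2 cos2Dsin2.
by rewrite mulrN mulrC addNr.
Qed.

Lemma conjc_sumP (R : realType) (I : finType) (P : pred I) (F : I -> R[i]) :
  conjc (\sum_(i | P i) F i) = \sum_(i | P i) conjc (F i).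
Proof. exact: rmorph_sum. Qed.

Lemma conj_1m2 (R : realType) (q : R[i]) : conjc (1 - 2 * q) = 1 - 2 * conjc q.
Proof. by rewrite rmorphB rmorph1 rmorphM rmorph_nat. Qed.

Theorem theorem7 (R : realType) (n m : nat) (hm : (0 < m)%N)
  (f : bvec n -> bool) (S : {set bvec n}) :
  let g : bvec n -> bool := fun x => x \in S in
  let p : R[i] := (2 ^+ n)^-1 * \sum_(x in S) `|mHadamard R m f x| ^+ 2 in
  \sum_(y : bvec n | y != zerovec n) A33_prob R m g f f y = 4 * p - 4 * p ^+ 2.
Proof.
move=> g p.
pose z := zeta R m.
pose psi3 := tensor_apply (Omega R m) (phase_oracle f (tensor_apply (Hgate R) (@ket0 R n))).
pose psi4 := phase_oracle g psi3.
pose psi7 := A33_state R m g f f.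
have hz : z * conjc z = 1 := zetaJ R m.
have hzb : conjc z * conjc (conjc z) = 1 by rewrite conjcK mulrC.
have N3 : \sum_(y : bvec n) psi3 y * conjc (psi3 y) = 1.
  change (@nrm R n (tensor_apply (Omega_gen z) (phase_oracle f (tensor_apply (Hgate R) (@ket0 R n)))) = 1).
  by rewrite parseval // nrm_phase Hgate_eq parseval ?nrm_ket0 // mul1r rmorph1.
have N7 : \sum_(y : bvec n) psi7 y * conjc (psi7 y) = 1.
  change (@nrm R n (tensor_apply (Omega_gen (conjc z)) (phase_oracle f (tensor_apply (Hgate R) psi4))) = 1).
  rewrite parseval // nrm_phase Hgate_eq parseval ?mul1r ?rmorph1 //.
  by rewrite nrm_phase; exact: N3.
have psi3E y : psi3 y = \sum_(x : bvec n) (cc R n * sgn R (dotb x y) * z ^+ wt x) * (sgn R (f x) * cc R n).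
  rewrite /psi3 /Omega tensor_Omega; apply: eq_bigr => x _.
  by rewrite /phase_oracle psi1E.
have A0 : psi7 (zerovec n) = \sum_(y : bvec n) psi4 y * conjc (psi3 y).
  change (tensor_apply (Omega_gen (conjc z)) (phase_oracle f (tensor_apply (Hgate R) psi4)) (zerovec n) = \sum_(y : bvec n) psi4 y * conjc (psi3 y)).
  rewrite tensor_Omega.
  under eq_bigr do rewrite {1}/phase_oracle Hgate_eq tensor_Omega.
  under [RHS]eq_bigr do rewrite psi3E conjc_sum mulr_sumr.
  rewrite exchange_big /=; apply: eq_bigr => x _.
  rewrite mulr_sumr mulr_sumr; apply: eq_bigr => y _.
  rewrite !conjcM !sgnJ ccJ conjcX dotb0 dotbC expr1n sgn0; ring.
pose q := \sum_(y in S) psi3 y * conjc (psi3 y).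
have Q : \sum_(y : bvec n) psi4 y * conjc (psi3 y) = 1 - 2 * q.
  transitivity (\sum_(y : bvec n) (psi3 y * conjc (psi3 y)
       - 2 * (if y \in S then psi3 y * conjc (psi3 y) else 0))).
    apply: eq_bigr => y _; rewrite /psi4 /phase_oracle /g.
    by case: (y \in S); rewrite ?sgn0 ?sgn1; ring.
  by rewrite sumrB -mulr_sumr -big_mkcond N3.
have Pq : q = p.
  rewrite /p /q mulr_sumr; apply: eq_bigr => y _.
  rewrite sqr_normc psi3E /mHadamard.
  set T := \sum_(x : bvec n) sgn R (f x (+) dotb x y) * zeta R m ^+ wt x.
  have -> : \sum_(x : bvec n) (cc R n * sgn R (dotb x y) * z ^+ wt x) * (sgn R (f x) * cc R n)
      = cc R n * cc R n * T.
    rewrite /T mulr_sumr; apply: eq_bigr => x _; rewrite sgnD; ring.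
  set d := ((Num.sqrt (2 ^+ n : R))^-1)%:C%C.
  have dd : d * d = (2 ^+ n)^-1.
    rewrite /d -rmorphM /= -expr2 exprVn sqr_sqrtr ?exprn_ge0 ?ler0n //.
    by rewrite fmorphV /= rmorphXn rmorph_nat.
  have dJ : conjc d = d by rewrite /d conjc_real.
  transitivity ((cc R n * cc R n) * (cc R n * cc R n) * (T * conjc T)).
    rewrite !conjcM ccJ; ring.
  transitivity ((2 ^+ n)^-1 * (d * d) * (T * conjc T)); last by rewrite conjcM dJ; ring.
  by rewrite cc2 dd.
have qJ : conjc q = q.
  by rewrite /q conjc_sumP; apply: eq_bigr => y _; rewrite conjcM conjcK mulrC.
rewrite /A33_prob.
under eq_bigr do rewrite sqr_normc.
transitivity (\sum_(y : bvec n) psi7 y * conjc (psi7 y) - psi7 (zerovec n) * conjc (psi7 (zerovec n))).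
  by rewrite [in RHS](bigD1 (zerovec n)) //= addrC addrK.
rewrite N7 A0 Q conj_1m2 qJ -Pq; ring.
Qed.
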